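(* Let $b \in \mathbb{Z}_{>0}$, let $\ell \ge 0$ be an integer, and let $X_b = \{0,1\}^\ell \times \{0,1,\dots,b\} \subseteq \mathbb{Z}^{\ell+1}$. Then the polyhedron $P = \{x \in \mathbb{R}^{\ell+1} : x_k \le 1 + \sum_{i=k+1}^{\ell+1}(b+1)^{-i}x_i \text{ for } k\in\{1,\dots,\ell\},\ x_{\ell+1}\le b,\ x_1 + \sum_{i=2}^{\ell+1}(b+1)^{-i}x_i \ge 0\}$ satisfies $P \cap \mathbb{Z}^{\ell+1} = X_b$. In particular, $\mathrm{rc}(X_b) \le \ell+2$.
   Context: $\mathrm{rc}(X)$ is the smallest number of facets of a polyhedron $P\subseteq\mathbb{R}^n$ with $P \cap \mathbb{Z}^n = X$. *)

(* Defs.v *)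
From HB Require Import structures.
From mathcomp Require Import all_boot all_order all_algebra.
From mathcomp Require Import classical_sets reals.
Set Implicit Arguments. Unset Strict Implicit. Unset Printing Implicit Defensive.
Import Order.TTheory GRing.Theory Num.Theory.
Local Open Scope ring_scope.
Local Open Scope classical_set_scope.

Section PolyDefs.
Variables (R : realType) (n : nat).

Definition dotv (a x : 'rV[R]_n) : R := \sum_(i < n) a ord0 i * x ord0 i.

Definition polyhedron (P : set 'rV[R]_n) : Prop :=
  exists (m : nat) (A : 'I_m -> 'rV[R]_n) (c : 'I_m -> R),
    P = [set x | forall j, dotv (A j) x <= c j].

Definition Zpts : set 'rV[R]_n := [set x | forall i, x ord0 i \is a Num.int].

Definition face (P F : set 'rV[R]_n) : Prop :=
  exists (a : 'rV[R]_n) (d : R),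
    (forall x, P x -> dotv a x <= d) /\ F = P `&` [set x | dotv a x = d].

Definition affdim_ge (S : set 'rV[R]_n) (d : nat) : Prop :=
  exists p : 'I_d.+1 -> 'rV[R]_n,
    (forall i, S (p i)) /\ row_free (\matrix_(i < d) (p (lift ord0 i) - p ord0)).

Definition affdim (S : set 'rV[R]_n) (d : nat) : Prop :=
  affdim_ge S d /\ ~ affdim_ge S d.+1.

Definition facet (P F : set 'rV[R]_n) : Prop :=
  face P F /\ exists d : nat, affdim P d.+1 /\ affdim F d.

Definition at_most_facets (P : set 'rV[R]_n) (k : nat) : Prop :=
  exists f : 'I_k -> set 'rV[R]_n, forall F, facet P F -> exists i, F = f i.

Definition rc_le (X : set 'rV[R]_n) (k : nat) : Prop :=
  exists P : set 'rV[R]_n, polyhedron P /\ P `&` Zpts = X /\ at_most_facets P k.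

End PolyDefs.

(* X_b = {0,1}^l x {0,...,b}, coordinates indexed 0..l (paper: 1..l+1) *)
Definition Xb (R : realType) (l b : nat) : set 'rV[R]_l.+1 :=
  [set x | (forall i : 'I_l.+1, (i < l)%N -> x ord0 i = 0 \/ x ord0 i = 1) /\
           exists k : nat, (k <= b)%N /\ x ord0 ord_max = k%:R].

(* The polyhedron P of the lemma; paper index i+1 corresponds to our i *)
Definition Pb (R : realType) (l b : nat) : set 'rV[R]_l.+1 :=
  [set x |
    (forall k : 'I_l.+1, (k < l)%N ->
       x ord0 k <= 1 + \sum_(i < l.+1 | (k < i)%N) (b.+1)%:R ^- (i.+1) * x ord0 i) /\
    x ord0 ord_max <= b%:R /\
    0 <= x ord0 ord0 + \sum_(i < l.+1 | (0 < i)%N) (b.+1)%:R ^- (i.+1) * x ord0 i].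

(* Main.v *)
Require Import Defs.
From HB Require Import structures.
From mathcomp Require Import all_boot all_order all_algebra.
From mathcomp Require Import classical_sets reals.
From mathcomp Require Import zify ring lra.
Import Order.TTheory GRing.Theory Num.Theory.
Local Open Scope ring_scope.
Local Open Scope classical_set_scope.

Definition wt (R : realType) (b i : nat) : R := (b.+1)%:R ^- i.+1.
Definition Usum (R : realType) (l b : nat) (x : 'rV[R]_l.+1) (k : nat) : R :=
  \sum_(i < l.+1 | (k < i)%N) wt R b i * x ord0 i.

Lemma wt_gt0 (R : realType) b i : 0 < wt R b i.
Proof. by rewrite /wt invr_gt0 exprn_gt0 // ltr0Sn. Qed.

Lemma wtS (R : realType) b i : wt R b i.+1 * (b.+1)%:R = wt R b i.
Proof.
rewrite /wt exprS invfM mulrC mulrA mulfV ?mul1r //.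
by rewrite pnatr_eq0.
Qed.

Lemma wt_lt1 (R : realType) b i : (0 < b)%N -> wt R b i < 1.
Proof.
move=> hb; rewrite /wt invf_lt1 ?exprn_gt0 ?ltr0Sn //.
rewrite exprn_egt1 // ltr1n; lia.
Qed.

Lemma Usum_l (R : realType) l b x : Usum R l b x l = 0.
Proof.
rewrite /Usum big_pred0 // => i; rewrite ltnNge -ltnS ltn_ord //.
Qed.

Lemma Usum_S (R : realType) l b x k : (k < l)%N ->
  Usum R l b x k = wt R b k.+1 * x ord0 (inord k.+1) + Usum R l b x k.+1.
Proof.
move=> hk; rewrite /Usum (bigD1 (inord k.+1)) /=; last by rewrite inordK ?ltnS.
rewrite inordK ?ltnS //; congr (_ + _).
apply: eq_bigl => i; rewrite -val_eqE /= inordK ?ltnS //.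
by case: (ltngtP k.+1 i); case: (ltngtP k i) => //; lia.
Qed.

Lemma int_le1 (R : realType) (y : R) : y \is a Num.int -> y < 2 -> y <= 1.
Proof.
case/intrP=> z ->.
rewrite (_ : 2 = (2%:Z)%:~R) // (_ : 1 = (1%:Z)%:~R) // ltr_int ler_int; lia.
Qed.

Lemma int_ge0 (R : realType) (y : R) : y \is a Num.int -> -1 < y -> 0 <= y.
Proof.
case/intrP=> z ->.
rewrite (_ : -1 = (-1%:Z)%:~R) // (_ : 0 = (0%:Z)%:~R) // ltr_int ler_int; lia.
Qed.

Lemma int01 (R : realType) (y : R) : y \is a Num.int -> 0 <= y -> y <= 1 -> y = 0 \/ y = 1.
Proof.
case/intrP=> z ->.
rewrite (_ : 1 = (1%:Z)%:~R) // (_ : 0 = (0%:Z)%:~R) // !ler_int => h1 h2.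
have [->|->] : z = 0 \/ z = 1 by lia.
by left. by right.
Qed.

Lemma Usum_ge (R : realType) l b x k : (l <= k)%N -> Usum R l b x k = 0.
Proof.
move=> hk; rewrite /Usum big_pred0 // => i; have := ltn_ord i; lia.
Qed.


Lemma nonneg_helper (R : realType) (c u y : R) :
  y \is a Num.int -> 0 < c -> u < c -> 0 <= c * y + u -> 0 <= y.
Proof.
move=> yi c0 uc h; apply: int_ge0 => //.
rewrite ltNge; apply/negP => hy.
have : c * y <= - c by rewrite -[X in _ <= X]mulrN1 ler_wpM2l // ltW.
lra.
Qed.

Lemma down_aux (R : realType) l b (x : 'rV[R]_l.+1) : (0 < b)%N ->
  (forall i, x ord0 i \is a Num.int) ->
  (forall k : 'I_l.+1, (k < l)%N -> x ord0 k <= 1 + Usum R l b x k) ->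
  x ord0 ord_max <= b%:R ->
  forall m j, (j <= l)%N -> (l - j = m)%N ->
  Usum R l b x j <= wt R b j - wt R b l /\ ((j < l)%N -> x ord0 (inord j) <= 1).
Proof.
move=> hb Hint Hc Hl m; elim: m => [|m IH] j hj hm.
  have -> : j = l by lia.
  by rewrite Usum_l subrr; split => //; rewrite ltnn.
have hjl : (j < l)%N by lia.
have [IH1 IH2] := IH j.+1 hjl (ltac:(lia)).
have HU : Usum R l b x j <= wt R b j - wt R b l.
  rewrite Usum_S //.
  have wj := wtS R b j.
  have wp := wt_gt0 R b j.+1.
  have [ejl|njl] := eqVneq j.+1 l.
    have -> : (inord j.+1 : 'I_l.+1) = ord_max by apply: val_inj; rewrite /= inordK ?ejl.
    rewrite ejl Usum_l addr0 -wj.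
    have e : wt R b j.+1 = wt R b l by rewrite ejl.
    rewrite e in wp *.
    have := ler_wpM2l (ltW wp) Hl.
    rewrite -[(b.+1)%:R]natr1 mulrDr mulr1; lra.
  have hx := IH2 (ltac:(lia)).
  have := ler_wpM2l (ltW wp) hx.
  have h2 : (2:R) <= (b.+1)%:R by rewrite ler_nat; lia.
  have := ler_wpM2l (ltW wp) h2.
  rewrite mulr1 -wj.
  lra.
split => // _.
apply: int_le1 => //.
have := Hc (inord j); rewrite inordK ?ltnS // => /(_ hjl).
have := wt_lt1 R b j hb; have := wt_gt0 R b l.
lra.
Qed.


Lemma up_aux (R : realType) l b (x : 'rV[R]_l.+1) : (0 < b)%N ->
  (forall i, x ord0 i \is a Num.int) ->
  (forall k : 'I_l.+1, (k < l)%N -> x ord0 k <= 1 + Usum R l b x k) ->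
  x ord0 ord_max <= b%:R ->
  0 <= x ord0 ord0 + Usum R l b x 0 ->
  forall k, (k <= l)%N -> 0 <= x ord0 (inord k) /\ 0 <= Usum R l b x k.
Proof.
move=> hb Hint Hc Hl Hv.
have D j : (j <= l)%N -> Usum R l b x j <= wt R b j - wt R b l /\
   ((j < l)%N -> x ord0 (inord j) <= 1) by move=> hj; exact: (@down_aux R l b x hb Hint Hc Hl _ j hj erefl).
have Ult j : (j <= l)%N -> Usum R l b x j < wt R b j.
  move=> hj; have [h _] := D j hj; have := wt_gt0 R b l; lra.
elim=> [|k IH] hk.
  have e0 : (inord 0 : 'I_l.+1) = ord0 by apply: val_inj; rewrite /= inordK.
  rewrite e0.
  have x0 : 0 <= x ord0 ord0.
    apply: (@nonneg_helper R 1 (Usum R l b x 0)) => //; last by rewrite mul1r.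
    have := Ult 0%N hk; have := wt_lt1 R b 0 hb; lra.
  split => //.
  have [l0|l0] := eqVneq l 0%N; first by rewrite Usum_ge ?l0.
  have [_ h1] := D 0%N hk; have := h1 (ltac:(lia)); rewrite e0 => x1.
  have [e|e] := @int01 R _ (Hint ord0) x0 x1.
    by move: Hv; rewrite e add0r.
  have l0p : (0 < l)%N by rewrite lt0n.
  have := Hc ord0 l0p; rewrite e => h.
  have h2 : Usum R l b x (@ord0 l) = Usum R l b x 0 by [].
  lra.
have [_ IHU] := IH (ltac:(lia)).
have Us := @Usum_S R l b x k (ltac:(lia)).
have xk : 0 <= x ord0 (inord k.+1).
  apply: (@nonneg_helper R (wt R b k.+1) (Usum R l b x k.+1)) => //.
  - exact: wt_gt0.
  - exact: Ult.
  - by rewrite -Us.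
split => //.
have [kl|kl] := eqVneq k.+1 l; first by rewrite Usum_ge ?kl.
have [_ h1] := D k.+1 hk; have := h1 (ltac:(lia)) => x1.
have [e|e] := @int01 R _ (Hint _) xk x1.
  by move: Us; rewrite e mulr0 add0r => <-.
have := Hc (inord k.+1); rewrite inordK ?ltnS // => /(_ (ltac:(lia))).
rewrite e => h; lra.
Qed.

Lemma part1 (R : realType) (b l : nat) (hb : (0 < b)%N) :
  @Pb R l b `&` @Zpts R l.+1 = @Xb R l b.
Proof.
apply/seteqP; split => x /=.
  move=> [[Hc [Hl Hv]] Hint].
  have U := @up_aux R l b x hb Hint Hc Hl Hv.
  have D j : (j <= l)%N -> Usum R l b x j <= wt R b j - wt R b l /\
   ((j < l)%N -> x ord0 (inord j) <= 1) by move=> hj; exact: (@down_aux R l b x hb Hint Hc Hl _ j hj erefl).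
  split.
    move=> i il.
    have [h _] := U i (ltnW il).
    have [_ h1] := D i (ltnW il).
    have := h1 il; rewrite inord_val => h2; rewrite inord_val in h.
    exact: int01.
  have [h _] := U l (leqnn _).
  have e : (inord l : 'I_l.+1) = ord_max by apply: val_inj; rewrite /= inordK.
  rewrite e in h.
  have /natrP[n hn] : x ord0 ord_max \is a Num.nat by rewrite natrEint Hint h.
  exists n; split => //.
  by rewrite -(ler_nat R) -hn.
move=> [H01 [k [kb Hk]]].
have x0 i : 0 <= x ord0 i.
  have [il|] := ltnP i l; first by case: (H01 i il) => ->.
  move=> li; have -> : i = ord_max by apply: val_inj => /=; have := ltn_ord i; lia.
  by rewrite Hk ler0n.
have U0 j : 0 <= Usum R l b x j.
  by apply: sumr_ge0 => i _; apply: mulr_ge0 => //; exact: ltW (wt_gt0 R b i).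
split.
  split.
    move=> k' hk'; case: (H01 k' hk') => ->; last by rewrite lerDl; exact: (U0 k').
    by apply: addr_ge0 => //; exact: (U0 k').
  split; first by rewrite Hk ler_nat.
  by apply: addr_ge0 => //; exact: (U0 0%N).
move=> i.
have [il|li] := ltnP i l; first by case: (H01 i il) => ->; rewrite ?rpred0 ?rpred1.
have -> : i = ord_max by apply: val_inj => /=; have := ltn_ord i; lia.
by rewrite Hk rpred_nat.
Qed.


Lemma dotvD (R : realType) n (a x y : 'rV[R]_n) : dotv a (x + y) = dotv a x + dotv a y.
Proof. by rewrite /dotv -big_split /=; apply: eq_bigr => i _; rewrite mxE mulrDr. Qed.

Lemma dotvB (R : realType) n (a x y : 'rV[R]_n) : dotv a (x - y) = dotv a x - dotv a y.
Proof. by rewrite /dotv -sumrB /=; apply: eq_bigr => i _; rewrite !mxE mulrBr. Qed.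

Lemma dotvZ (R : realType) n (a x : 'rV[R]_n) k : dotv a (k *: x) = k * dotv a x.
Proof. by rewrite /dotv mulr_sumr; apply: eq_bigr => i _; rewrite mxE mulrCA. Qed.

Lemma dotvZl (R : realType) n (a x : 'rV[R]_n) k : dotv (k *: a) x = k * dotv a x.
Proof. by rewrite /dotv mulr_sumr; apply: eq_bigr => i _; rewrite mxE mulrA. Qed.

Lemma dotv_sum (R : realType) n N (a : 'rV[R]_n) (p : 'I_N -> 'rV[R]_n) :
  dotv a (\sum_i p i) = \sum_i dotv a (p i).
Proof.
rewrite /dotv exchange_big /=; apply: eq_bigr => t _.
by rewrite summxE mulr_sumr.
Qed.

Lemma dotv0l (R : realType) n (x : 'rV[R]_n) : dotv 0 x = 0.
Proof. by rewrite /dotv big1 // => i _; rewrite mxE mul0r. Qed.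

Lemma mulmx_trE (R : realType) n e (u : 'rV[R]_n) (M : 'M[R]_(e, n)) k :
  (u *m M^T) ord0 k = dotv u (row k M).
Proof. by rewrite mxE /dotv; apply: eq_bigr => t _; rewrite !mxE. Qed.

Lemma dotv_self_gt0 (R : realType) n (a : 'rV[R]_n) : a != 0 -> 0 < dotv a a.
Proof.
move=> anz; rewrite lt_neqAle; apply/andP; split; last first.
  by apply: sumr_ge0 => i _; rewrite -expr2 sqr_ge0.
apply/eqP => h; move/eqP: anz; apply; apply/rowP => i.
have := (psumr_eq0P (fun i _ => (ltac:(rewrite -expr2 sqr_ge0 //) : 0 <= a ord0 i * a ord0 i))) (esym h) i isT.
by move/eqP; rewrite mulf_eq0 orbb mxE => /eqP.
Qed.

Lemma term_le_sum (R : realType) m (g : 'I_m -> R) j :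
  (forall i, 0 <= g i) -> g j <= \sum_i g i.
Proof.
move=> h; rewrite (bigD1 j) //= lerDl; apply: sumr_ge0 => i _; exact: h.
Qed.


Lemma facet_tight (R : realType) n m (A : 'I_m -> 'rV[R]_n) (c : 'I_m -> R) :
  (forall j, A j != 0) ->
  (forall k, (k <= n)%N -> affdim_ge [set x | forall j, dotv (A j) x <= c j] k) ->
  forall F, facet [set x | forall j, dotv (A j) x <= c j] F ->
  exists j, F = [set x | forall j, dotv (A j) x <= c j] `&` [set x | dotv (A j) x = c j].
Proof.
set P := [set x | forall j, dotv (A j) x <= c j].
move=> Anz Hfull F [[a [d [valid EF]]] [e [[hP1 hP2] [[p [pF rf]] hF2]]]].
have pP i : P (p i) by have := pF i; rewrite EF => -[].
have pd i : dotv a (p i) = d by have := pF i; rewrite EF => -[].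
have en : e.+1 = n.
  case: hP1 => q [_ rq].
  have h1 : (e.+1 <= n)%N by move/eqP: rq => <-; exact: rank_leq_col.
  have [h2|h2] := leqP n e.+1; first by apply/eqP; rewrite eqn_leq h1 h2.
  by exfalso; apply: hP2; apply: Hfull.
have anz : a != 0.
  apply/negP => /eqP a0; apply: hF2.
  have d0 : d = 0.
    by rewrite -(pd ord0) a0; apply: dotv0l.
  case: hP1 => q [qP rq]; exists q; split => // i; rewrite EF; split => //.
  by rewrite a0 d0; apply: dotv0l.
set y := (e.+1)%:R^-1 *: \sum_i p i.
have dy u : dotv u y = (e.+1)%:R^-1 * \sum_i dotv u (p i) by rewrite dotvZ dotv_sum.
have e0 : (0 : R) < (e.+1)%:R by rewrite ltr0Sn.
have dyle u r : (forall i, dotv u (p i) <= r) -> dotv u y <= r.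
  move=> h.
  have : \sum_(i < e.+1) dotv u (p i) <= \sum_(i < e.+1) r by apply: ler_sum => i _; exact: h.
  rewrite sumr_const card_ord -mulr_natr => hs.
  by rewrite dy mulrC ler_pdivrMr.
have yP : P y by move=> j; apply: dyle => i; exact: pP.
have ay : dotv a y = d.
  rewrite dy (eq_bigr (fun=> d)) ?sumr_const ?card_ord; last by move=> i _; exact: pd.
  by rewrite -[d *+ e.+1]mulr_natl mulrA mulVf ?mul1r // gt_eqF.
have [j hj] : exists j, dotv (A j) y = c j.
  case: (boolP [exists j, dotv (A j) y == c j]) => [/existsP [j /eqP hj]|/existsPn H]; first by exists j.
  exfalso.
  have lt j : dotv (A j) y < c j by rewrite lt_neqAle H yP.
  set s := fun j => c j - dotv (A j) y.
  set g := fun j => `|dotv (A j) a|.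
  have s0 j : 0 < s j by rewrite /s subr_gt0.
  set S := \sum_j g j / s j.
  have S0 : 0 <= S by apply: sumr_ge0 => j _; apply: divr_ge0; [exact: normr_ge0 | exact: ltW].
  set eps := (1 + S)^-1.
  have eps0 : 0 < eps by rewrite invr_gt0; lra.
  have zP : P (y + eps *: a).
    move=> j; rewrite dotvD [X in _ + X]dotvZ.
    have gj : g j / s j <= S.
      rewrite /S; apply: (@term_le_sum R m (fun j => g j / s j)) => i; apply: divr_ge0; [exact: normr_ge0 | exact: ltW].
    rewrite ler_pdivrMr // in gj.
    have : eps * g j < s j.
      rewrite /eps mulrC ltr_pdivrMr; last lra.
      have := s0 j; nra.
    have : dotv (A j) a <= g j by exact: ler_norm.
    move=> h1 h2.
    have sj : s j = c j - dotv (A j) y by [].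
    have := ler_wpM2l (ltW eps0) h1; lra.
  have := valid _ zP; rewrite dotvD [X in _ + X]dotvZ ay.
  have := @dotv_self_gt0 R n a anz.
  have := eps0; nra.
have tp i : dotv (A j) (p i) = c j.
  have hs : \sum_i (c j - dotv (A j) (p i)) = 0.
    rewrite sumrB sumr_const card_ord.
    have : \sum_i dotv (A j) (p i) = (e.+1)%:R * c j.
      by rewrite -hj dy mulrA mulfV ?mul1r // gt_eqF.
    by move=> ->; rewrite mulr_natl subrr.
  have := (psumr_eq0P (fun i _ => (ltac:(rewrite subr_ge0; exact: pP) : 0 <= c j - dotv (A j) (p i)))) hs i isT.
  by move/eqP; rewrite subr_eq0 => /eqP.
set M := \matrix_(i < e) (p (lift ord0 i) - p ord0).
have rowM k : row k M = p (lift ord0 k) - p ord0 by apply/rowP => t; rewrite !mxE.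
have aK : (a <= kermx M^T)%MS.
  apply/sub_kermxP; apply/rowP => k; rewrite mulmx_trE rowM dotvB !pd subrr mxE //.
have AK : (A j <= kermx M^T)%MS.
  apply/sub_kermxP; apply/rowP => k; rewrite mulmx_trE rowM dotvB !tp subrr mxE //.
have rK : \rank (kermx M^T) = 1%N.
  rewrite mxrank_ker mxrank_tr; move/eqP: rf => ->; lia.
have /andP[_ Ka] : (a == kermx M^T)%MS.
  by rewrite -(mxrank_leqif_eq aK).2 rK rank_rV anz.
have /submxP[D eD] := submx_trans AK Ka.
rewrite (mx11_scalar D) mul_scalar_mx in eD.
set lam := D 0 0 in eD.
have lam0 : lam != 0 by apply/eqP => l0; move: (Anz j); rewrite eD l0 scale0r eqxx.
have cj : c j = lam * d by rewrite -(tp ord0) eD dotvZl pd.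
exists j; rewrite EF; apply/seteqP; split => x /= [Px hx]; split => //.
  by rewrite eD dotvZl hx cj.
by move: hx; rewrite eD dotvZl cj => /(mulfI lam0).
Qed.


Definition Arow (R : realType) l b (j : 'I_(l + 2)) : 'rV[R]_l.+1 :=
  \row_(i < l.+1) (if (j < l)%N then ((i == j :> nat)%:R - ((j < i)%N)%:R * wt R b i)
                   else if (j == l :> nat) then (i == l :> nat)%:R
                   else - ((i == 0%N :> nat)%:R + ((0 < i)%N)%:R * wt R b i)).

Definition cv (R : realType) l b (j : 'I_(l + 2)) : R :=
  if (j < l)%N then 1 else if (j == l :> nat) then b%:R else 0.

Lemma dot_delta (R : realType) l (x : 'rV[R]_l.+1) k : (k < l.+1)%N ->
  \sum_(i < l.+1) (i == k :> nat)%:R * x ord0 i = x ord0 (inord k).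
Proof.
move=> hk; rewrite (bigD1 (inord k)) //= inordK // eqxx mul1r big1 ?addr0 // => i hi.
have : (i != k :> nat) by apply: contra hi => /eqP e; apply/eqP/val_inj; rewrite /= inordK.
by move/negbTE => ->; rewrite mul0r.
Qed.

Lemma dot_ind (R : realType) l b (x : 'rV[R]_l.+1) k :
  \sum_(i < l.+1) ((k < i)%N)%:R * wt R b i * x ord0 i = Usum R l b x k.
Proof.
rewrite /Usum [RHS]big_mkcond; apply: eq_bigr => i _.
by case: ifP => _; rewrite ?mul1r ?mul0r.
Qed.

Lemma dotA_lt (R : realType) l b (x : 'rV[R]_l.+1) (j : 'I_(l + 2)) : (j < l)%N ->
  dotv (Arow R l b j) x = x ord0 (inord j) - Usum R l b x j.
Proof.
move=> hj; rewrite /dotv; under eq_bigr => i _ do rewrite mxE hj mulrBl.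
rewrite sumrB dot_delta; last by lia.
by rewrite dot_ind.
Qed.

Lemma dotA_eq (R : realType) l b (x : 'rV[R]_l.+1) (j : 'I_(l + 2)) : (j = l :> nat) ->
  dotv (Arow R l b j) x = x ord0 ord_max.
Proof.
move=> hj; rewrite /dotv; under eq_bigr => i _ do rewrite mxE hj ltnn eqxx.
rewrite dot_delta //; congr (x ord0 _); apply: val_inj; rewrite /= inordK //.
Qed.

Lemma dotA_last (R : realType) l b (x : 'rV[R]_l.+1) (j : 'I_(l + 2)) :
  (l < j)%N -> dotv (Arow R l b j) x = - (x ord0 ord0 + Usum R l b x 0).
Proof.
move=> hj; have h1 : (j < l)%N = false by lia.
have h2 : (j == l :> nat) = false by lia.
rewrite /dotv; under eq_bigr => i _ do rewrite mxE h1 h2 mulNr mulrDl.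
rewrite sumrN big_split /= dot_delta // dot_ind; congr (- (x ord0 _ + _)).
by apply: val_inj; rewrite /= inordK.
Qed.


Lemma PE (R : realType) l b :
  [set x : 'rV[R]_l.+1 | forall j, dotv (Arow R l b j) x <= cv R l b j] = @Pb R l b.
Proof.
apply/seteqP; split => x /= H.
  split.
    move=> k hk; have := H (@Ordinal (l + 2) k (ltac:(lia))).
    rewrite dotA_lt //= /cv /= hk inord_val.
    change (\sum_(i < l.+1 | (k < i)%N) (b.+1)%:R ^- i.+1 * x ord0 i) with (Usum R l b x k).
    lra.
  split.
    have := H (@Ordinal (l + 2) l (ltac:(lia))).
    by rewrite dotA_eq //= /cv /= ltnn eqxx.
  have := H (@Ordinal (l + 2) l.+1 (ltac:(lia))).
  rewrite dotA_last //= /cv /=.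
  have -> : (l.+1 < l)%N = false by lia.
  have -> : (l.+1 == l) = false by lia.
  change (\sum_(i < l.+1 | (0 < i)%N) (b.+1)%:R ^- i.+1 * x ord0 i) with (Usum R l b x 0).
  lra.
case: H => [Hc [Hl Hv]] j.
change (\sum_(i < l.+1 | (0 < i)%N) (b.+1)%:R ^- i.+1 * x ord0 i) with (Usum R l b x 0) in Hv.
have [hj|hj] := ltnP j l.
  rewrite dotA_lt // /cv hj.
  have := Hc (inord j); rewrite inordK; last by lia.
  move=> /(_ hj) hh.
  change (\sum_(i < l.+1 | (j < i)%N) (b.+1)%:R ^- i.+1 * x ord0 i) with (Usum R l b x j) in hh.
  lra.
have [ej|ej] := eqVneq (j : nat) l.
  by rewrite dotA_eq // /cv ej ltnn eqxx.
rewrite dotA_last; last by lia.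
rewrite /cv; have -> : (j < l)%N = false by lia.
rewrite (negbTE ej); lra.
Qed.

Lemma Anz (R : realType) l b (j : 'I_(l + 2)) : Arow R l b j != 0.
Proof.
apply/eqP => h.
have [hj|hj] := ltnP j l.
  have := congr1 (fun M : 'rV[R]_l.+1 => M ord0 (inord j)) h.
  rewrite !mxE hj inordK; last by lia.
  by rewrite eqxx ltnn mul0r subr0 => /eqP; rewrite oner_eq0.
have [ej|ej] := eqVneq (j : nat) l.
  have := congr1 (fun M : 'rV[R]_l.+1 => M ord0 ord_max) h.
  rewrite !mxE ej ltnn /= eqxx.
  by move/eqP; rewrite oner_eq0.
have := congr1 (fun M : 'rV[R]_l.+1 => M ord0 ord0) h.
rewrite !mxE (negbTE ej); have -> : (j < l)%N = false by lia.
rewrite /= mul0r addr0 => /eqP; rewrite oppr_eq0 oner_eq0 //.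
Qed.

Lemma fulldim (R : realType) l b : (0 < b)%N ->
  forall k, (k <= l.+1)%N -> affdim_ge (@Pb R l b) k.
Proof.
move=> hb k hk.
pose p (i : 'I_k.+1) : 'rV[R]_l.+1 :=
  if unlift ord0 i is Some i' then row i' (pid_mx k) else 0.
have inX z : @Xb R l b z -> @Pb R l b z.
  by rewrite -(@part1 R b l hb) => -[].
exists p; split.
  move=> i; apply: inX; rewrite /p.
  case: (unlift ord0 i) => [i'|].
    split.
      by move=> t _; rewrite !mxE; case: (_ && _); [right|left].
    exists ((i' == l :> nat) && (i' < k))%N; split.
      by case: (_ && _) => //=; lia.
    by rewrite !mxE.
  split; first by move=> t _; rewrite mxE; left.
  by exists 0%N; split => //; rewrite mxE.
have -> : (\matrix_(i < k) (p (lift ord0 i) - p ord0)) = pid_mx k.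
  apply/matrixP => i t; rewrite !mxE /p liftK unlift_none !mxE subr0 //.
by rewrite /row_free rank_pid_mx.
Qed.


Theorem lemma5p1 (R : realType) (b l : nat) (hb : (0 < b)%N) :
  @Pb R l b `&` @Zpts R l.+1 = @Xb R l b /\ rc_le (@Xb R l b) (l + 2).
Proof.
split; first exact: part1.
set P := [set x : 'rV[R]_l.+1 | forall j, dotv (Arow R l b j) x <= cv R l b j].
exists P; split; first by exists (l + 2), (Arow R l b), (cv R l b).
split; first by rewrite /P PE; exact: part1.
exists (fun j => P `&` [set x | dotv (Arow R l b j) x = cv R l b j]) => F hF.
apply: (@facet_tight R l.+1 (l + 2) (Arow R l b) (cv R l b)) => //.
  exact: Anz.
by move=> k hk; rewrite PE; exact: fulldim.
Qed.
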